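(* For every integer $k\ge 2$, the complete graph $\mathcal K_k$ is an almost minor of the $(2k-2)\times(2k-2)$ grid graph $\mathcal G_{2k-2}$.
   Context: The $n\times n$ grid graph $\mathcal G_n$ has vertices $v_{i,j}$, $i,j\in[n]$, with $v_{i,j}$ adjacent to $v_{i',j'}$ iff $|i-i'|+|j-j'|=1$. For graphs $\mathcal G_X,\mathcal G_Y$ with vertex sets $X,Y$, a map $M:Y\to 2^X$ is almost minor if: (1) $|M(y)|\in\{1,2\}$ for every $y\in Y$; (2) for every $x\in X$ there is $y\in Y$ with $M(y)=\{x\}$, and for all $x,x'$ adjacent in $\mathcal G_X$ there are $y,y'$ adjacent in $\mathcal G_Y$ with $M(y)=\{x\}$ and $M(y')=\{x'\}$; (3) for each $x\in X$ the set $\{y: x\in M(y)\}$ is connected in $\mathcal G_Y$; (4) if $M(y)=\{x,x'\}$ with $x\ne x'$ and $y'$ is adjacent to $y$, then $M(y')=\{x\}$ or $M(y')=\{x'\}$. $\mathcal G_X$ is an almost minor of $\mathcal G_Y$ if such a map exists. *)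

(* Defs.v *)
From mathcomp Require Import all_boot.
Set Implicit Arguments. Unset Strict Implicit. Unset Printing Implicit Defensive.

(* |a - b| on nat (truncated subtractions, one of which is 0). *)
Definition dist (a b : nat) : nat := ((a - b) + (b - a))%N.

Definition grid_adj (n : nat) : rel ('I_n * 'I_n) :=
  fun u v => (dist u.1 v.1 + dist u.2 v.2 == 1)%N.

Definition complete_adj (k : nat) : rel 'I_k := fun i j => i != j.

Definition connected_in (Y : finType) (eY : rel Y) (S : {set Y}) : Prop :=
  forall a b, a \in S -> b \in S ->
    connect (fun u v => [&& eY u v, u \in S & v \in S]) a b.

Definition almost_minor_map (X Y : finType) (eX : rel X) (eY : rel Y)
  (M : Y -> {set X}) : Prop :=
  [/\ (forall y, #|M y| = 1 \/ #|M y| = 2)%N,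
      (forall x, exists y, M y = [set x]),
      (forall x x', eX x x' ->
         exists y y', [/\ eY y y', M y = [set x] & M y' = [set x']]),
      (forall x, connected_in eY [set y | x \in M y]) &
      (forall y x x', M y = [set x; x'] -> x != x' ->
         forall y', eY y y' -> M y' = [set x] \/ M y' = [set x'])].

Definition almost_minor (X Y : finType) (eX : rel X) (eY : rel Y) : Prop :=
  exists M : Y -> {set X}, almost_minor_map eX eY M.

(* Main.v *)
Require Import Defs.
From mathcomp Require Import all_boot.
From mathcomp Require Import zify.
Set Implicit Arguments. Unset Strict Implicit. Unset Printing Implicit Defensive.

Definition Pm (r c z : nat) : bool :=
  (((r %% 2 == 1) || (r + 2 < c)) && (z == c %/ 2)) ||
  (~~ ((r %% 2 == 1) || (r + 2 < c)) &&
     ((z == r %/ 2 + 1) || ((c %% 2 == 0) && (c <= r) && (z == c %/ 2)))).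

Definition cell p (r c : nat) : 'I_(2*p).+2 * 'I_(2*p).+2 := (inord r, inord c).

Definition Mp p (y : 'I_(2*p).+2 * 'I_(2*p).+2) : {set 'I_p.+2} :=
  [set z : 'I_p.+2 | Pm y.1 y.2 z].
Arguments Mp : clear implicits.

Lemma cellE p (y : 'I_(2*p).+2 * 'I_(2*p).+2) : y = cell p y.1 y.2.
Proof. by case: y => a b; rewrite /cell !inord_val. Qed.

Lemma Msing p (y : 'I_(2*p).+2 * 'I_(2*p).+2) (x : 'I_p.+2) :
  (forall z : 'I_p.+2, Pm y.1 y.2 z = (z == x :> nat)) -> Mp p y = [set x].
Proof. move=> H; apply/setP => z; rewrite !inE; exact: H. Qed.

Lemma walk (T : finType) (e : rel T) (f : nat -> T) a b : a <= b ->
  (forall t, a <= t -> t < b -> e (f t) (f t.+1)) -> connect e (f a) (f b).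
Proof.
elim: b => [|b IH] hab H.
  by have -> : a = 0 by lia.
case: (ltnP b a) => hba.
  by have -> : a = b.+1 by lia.
apply: connect_trans (IH hba _) (connect1 (H b _ _)) => //.
move=> t h1 h2; apply: H; lia.
Qed.

Lemma grid_adj_sym n : symmetric (@grid_adj n).
Proof. move=> u v; rewrite /grid_adj /dist; lia. Qed.

Lemma Pm_class p r c : r < (2*p).+2 -> c < (2*p).+2 ->
  (exists v, v < p.+2 /\ forall z, Pm r c z = (z == v)) \/
  (exists v w, [/\ v < p.+2, w < p.+2, v != w & forall z, Pm r c z = (z == v) || (z == w)]).
Proof.
move=> hr hc.
case: (boolP ((r %% 2 == 1) || (r + 2 < c))) => h.
  left; exists (c %/ 2); split; first lia.
  move=> z; rewrite /Pm; lia.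
case: (boolP ((c %% 2 == 0) && (c <= r))) => h2.
  right; exists (r %/ 2 + 1), (c %/ 2); split; try lia.
  move=> z; rewrite /Pm; lia.
left; exists (r %/ 2 + 1); split; first lia.
move=> z; rewrite /Pm; lia.
Qed.

Lemma cross_nb r c r' c' a b : Pm r c a -> Pm r c b -> a != b ->
  dist r r' + dist c c' == 1 ->
  (forall z, Pm r' c' z = (z == a)) \/ (forall z, Pm r' c' z = (z == b)).
Proof.
rewrite /dist => ha hb hab hd.
move: ha hb; rewrite /Pm => ha hb.
have [[h1 [h2 [h3 h4]]]|[h1 h2]] : (r' = r /\ c' %% 2 = 1 /\ c' <= r + 1 /\ r %% 2 = 0) \/ (r' %% 2 = 1 /\ c' = c).
  lia.
  have [Ha|Hb] : (r %/ 2 + 1 = a) \/ (r %/ 2 + 1 = b) by lia.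
    by left => z; clear ha hb hab hd; rewrite /Pm; lia.
  by right => z; clear ha hb hab hd; rewrite /Pm; lia.
have [Ha|Hb] : (c %/ 2 = a) \/ (c %/ 2 = b) by lia.
  by left => z; clear ha hb hab hd; rewrite /Pm; lia.
by right => z; clear ha hb hab hd; rewrite /Pm; lia.
Qed.

Lemma conn p (x : 'I_p.+2) :
  connected_in (@grid_adj (2*p).+2) [set y | x \in Mp p y].
Proof.
set S := [set y | x \in Mp p y].
set e := (fun u v => [&& grid_adj u v, u \in S & v \in S]).
have esym : connect_sym e.
  apply: sym_connect_sym => u v; rewrite /e grid_adj_sym.
  by case: (u \in S); case: (v \in S); rewrite ?andbF ?andbT.
have hx := ltn_ord x.
set h := if x < p.+1 then cell p (2*p).+1 (2*x) else cell p (2*p) (2*p).+1.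
suff hub : forall y, y \in S -> connect e y h.
  move=> a b ha hb; apply: connect_trans (hub _ ha) _.
  by rewrite esym; apply: hub.
move=> y Hy; rewrite (cellE y).
move: Hy; rewrite /S !inE => Hy.
have hr := ltn_ord y.1; have hc := ltn_ord y.2.
move: Hy hr hc; set r := nat_of_ord y.1; set c := nat_of_ord y.2 => Hy hr hc.
rewrite /h; case: ifP => hxp.
  have col : forall r0, r0 < (2*p).+2 -> connect e (cell p r0 (2*x)) (cell p (2*p).+1 (2*x)).
    move=> r0 hr0.
    apply: (walk (f := fun t => cell p t (2*x))); first lia.
    move=> t h1 h2; rewrite /e /S !inE /grid_adj /dist /= !inordK; rewrite /Pm; lia.
  have [hc1|[[hc1 hc2]|[hr1 [hx1 hc1]]]] : c = 2*x \/ (c = (2*x).+1 /\ (r %% 2 = 1 \/ r + 2 < c))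
     \/ (r = 2*x - 2 /\ 1 <= x /\ c <= 2*x).
      move: Hy; rewrite /Pm; lia.
    - by rewrite hc1; apply: col.
    - apply: connect_trans (connect1 _) (col r hr).
      rewrite /e /S !inE /grid_adj /dist /= !inordK; rewrite /Pm; lia.
  - apply: connect_trans _ (col (2 * x - 2) _); last lia.
    rewrite hr1.
    apply: (walk (f := fun t => cell p (2*x - 2) t)); first lia.
    move=> t h1 h2; rewrite /e /S !inE /grid_adj /dist /= !inordK; rewrite /Pm; lia.
have hr1 : r = 2 * p by move: Hy; rewrite /Pm; lia.
rewrite hr1.
apply: (walk (f := fun t => cell p (2*p) t)); first lia.
move=> t h1 h2; rewrite /e /S !inE /grid_adj /dist /= !inordK; rewrite /Pm; lia.
Qed.

Theorem lemma6p10 (k : nat) : (2 <= k)%N ->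
  almost_minor (@complete_adj k) (@grid_adj (2 * k - 2)).
Proof.
case: k => [|[|p]] // _.
have -> : 2 * p.+2 - 2 = (2*p).+2 by lia.
exists (@Mp p); split.
- move=> y.
  have [[v [hv H]]|[v [w [hv hw hvw H]]]] := Pm_class (ltn_ord y.1) (ltn_ord y.2).
    left; rewrite (_ : Mp p y = [set inord v]) ?cards1 //.
    apply: Msing => z; rewrite H inordK //.
  right; rewrite (_ : Mp p y = [set inord v; inord w]).
    rewrite cards2 (_ : (inord v != inord w :> 'I_p.+2) = true) //.
    apply/eqP => /(congr1 val); rewrite /= !inordK //.
    by move/eqP; rewrite (negbTE hvw).
  apply/setP => z; rewrite !inE H -!val_eqE /= !inordK //.
- move=> x; have hx := ltn_ord x.
  case: (ltnP x p.+1) => hxp.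
    exists (cell p 1 (2*x)); apply: Msing => z /=; rewrite !inordK /Pm; lia.
  exists (cell p (2*p) (2*p).+1); apply: Msing => z /=; rewrite !inordK /Pm; lia.
- move=> i j; rewrite /complete_adj => hij.
  have key : forall a b : 'I_p.+2, a < b -> exists y y',
      [/\ grid_adj y y', Mp p y = [set a] & Mp p y' = [set b]].
    move=> a b hab; have ha := ltn_ord a; have hb := ltn_ord b.
    exists (cell p (2*b - 1) (2*a+1)), (cell p (2*b-2) (2*a+1)); split.
    + rewrite /grid_adj /dist /= !inordK; lia.
    + apply: Msing => z /=; rewrite !inordK /Pm; lia.
    + apply: Msing => z /=; rewrite !inordK /Pm; lia.
  case: (ltngtP i j) => h.
  + exact: key.
  + have [y [y' [H1 H2 H3]]] := key _ _ h.
    by exists y', y; split; rewrite // grid_adj_sym.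
  + by rewrite (val_inj h) eqxx in hij.
- exact: conn.
- move=> y x x' E hxx' y' hyy'.
  have ha : x \in Mp p y by rewrite E !inE eqxx.
  have hb : x' \in Mp p y by rewrite E !inE eqxx orbT.
  rewrite !inE in ha hb.
  have hab : (x : nat) != x' by [].
  move: hyy'; rewrite (cellE y') (cellE y) /grid_adj /= !inordK // => hd.
  have [H|H] := cross_nb ha hb hab hd.
    by left; rewrite -(cellE y'); apply: Msing.
  by right; rewrite -(cellE y'); apply: Msing.
Qed.
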